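(* Let $G\in\mathcal{RG}^{{\underline{\kappa}},*}_{g,n}$ be non-bipartite, $w$ a weight function on $G$ with $\operatorname{vp}_G(w)=\underline b$, and $e\in S(G)$ a static edge. (1) If $e$ is a bridge, let $G'$ be the bipartite connected component of $G-e$, colored black/white so that $e$ is incident to a black vertex, and let $I,J\subset\{1,\dots,n\}$ be the labels of black and white vertices of $G'$. Then $w(e)=\sum_{i\in I}b_i-\sum_{j\in J}b_j$. (2) If $e$ is not a bridge, then $G-e$ is connected and bipartite; color it so that both endpoints of $e$ are black and let $I,J$ be the labels of black and white vertices. Then $I\cup J=\{1,\dots,n\}$ and $w(e)=\tfrac12\bigl(\sum_{i\in I}b_i-\sum_{j\in J}b_j\bigr)$.
   Context: A ribbon graph is a finite graph (loops and multiple edges allowed) with a cyclic ordering of half-edges at each vertex; the cyclic orders determine faces (boundary cycles) and the genus. For a partition ${\underline{\kappa}}$ with all parts odd, $\mathcal{RG}^{{\underline{\kappa}},*}_{g,n}$ is the set of isomorphism classes of connected ribbon graphs of genus $g$ with $n$ vertices labeled $1,\dots,n$ and face degrees given by ${\underline{\kappa}}$ (the duals of ribbon graphs with $n$ labeled faces and vertex degrees ${\underline{\kappa}}$). A weight function is any $w:E(G)\to\mathbb R$; its vertex perimeters are $\operatorname{vp}_G(w)_v=\sum_e a_{ve}w(e)$ with $a_{ve}=2$ if $e$ is a loop at $v$, $1$ if $e$ is a non-loop edge incident to $v$, $0$ otherwise. For non-bipartite $G$, an edge $e$ is static if at least one connected component of $G-e$ is bipartite; $S(G)$ is the set of static edges.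 *)

(* Defs.v *)
From HB Require Import structures.
From mathcomp Require Import all_boot all_order all_algebra all_fingroup.
Set Implicit Arguments. Unset Strict Implicit. Unset Printing Implicit Defensive.
Import GRing.Theory Num.Theory.

(* Ribbon graphs in the combinatorial (dart) encoding:
   - D : finite set of darts (half-edges),
   - iota : fixed-point-free involution on D (edges = iota-orbits {d, iota d}),
   - sigma : rotation permutation (vertices = sigma-orbits, cyclic order),
   - vtx : D -> 'I_n labels the sigma-orbits bijectively by 0..n-1
     (label i corresponds to the paper's vertex i+1),
   - faces = orbits of sigma o iota. *)

Section RibbonGraphs.
Variables (D : finType) (n : nat) (sigma iota : {perm D}) (vtx : D -> 'I_n).

(* mathcomp: (p * q)%g x = q (p x), so this is sigma o iota *)
Definition face_perm : {perm D} := (iota * sigma)%g.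

Definition adjG : rel 'I_n :=
  fun x y => [exists d, (vtx d == x) && (vtx (iota d) == y)].

Definition in_edge (e d : D) : bool := (d == e) || (d == iota e).

Definition adj_minus (e : D) : rel 'I_n :=
  fun x y => [exists d, ~~ in_edge e d && (vtx d == x) && (vtx (iota d) == y)].

(* G is a connected ribbon graph of genus g with n labeled vertices and
   face degrees kappa (a partition with all parts odd). *)
Definition ribbon_graph_in (kappa : seq nat) (g : nat) : Prop :=
  (forall d, iota (iota d) = d) /\
  (forall d, iota d != d) /\
  (forall d d', (vtx d == vtx d') = fconnect sigma d d') /\
  (forall v : 'I_n, exists d, vtx d = v) /\
  (forall x y : 'I_n, connect adjG x y) /\
  all odd kappa /\
  perm_eq kappa [seq fingraph.order face_perm d | d <- enum (froots face_perm)] /\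
  (n + size kappa + 2 * g = 2 + #|D| %/ 2)%N.

Definition bipartite : Prop :=
  exists c : 'I_n -> bool, forall d, c (vtx d) != c (vtx (iota d)).

Definition comp_minus (e : D) (x : 'I_n) : pred 'I_n :=
  [pred y | connect (adj_minus e) x y].

Definition proper_minus (e : D) (C : pred 'I_n) (c : 'I_n -> bool) : Prop :=
  forall d, ~~ in_edge e d -> C (vtx d) -> c (vtx d) != c (vtx (iota d)).

Definition static_edge (e : D) : Prop :=
  ~ bipartite /\ exists x c, proper_minus e (comp_minus e x) c.

Definition is_bridge (e : D) : Prop :=
  exists x y : 'I_n, ~~ connect (adj_minus e) x y.

End RibbonGraphs.

(* Main.v *)
Require Import Defs.
From mathcomp Require Import all_boot all_order all_algebra all_fingroup.
From mathcomp Require Import lra.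
Import GRing.Theory Num.Theory.
Local Open Scope ring_scope.

Section Aux.
Variables (R : realFieldType) (D : finType) (n : nat) (iota : {perm D})
  (vtx : D -> 'I_n) (e : D).
Hypothesis invol : forall d, iota (iota d) = d.

Lemma in_edge_iota d : in_edge iota e (iota d) = in_edge iota e d.
Proof.
rewrite /in_edge (inj_eq (@perm_inj _ iota)).
have -> : (iota d == e) = (d == iota e).
  by apply/eqP/eqP => H; [rewrite -H invol | rewrite H invol].
by rewrite orbC.
Qed.

Lemma adj_minus_sym : symmetric (adj_minus iota vtx e).
Proof.
suff H : forall x y, adj_minus iota vtx e x y -> adj_minus iota vtx e y x.
  by move=> x y; apply/idP/idP; apply: H.
move=> x y /existsP [d /andP [/andP [Hd Hx] Hy]].
by apply/existsP; exists (iota d); rewrite in_edge_iota Hd invol Hy Hx.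
Qed.

Lemma comp_closed x d : ~~ in_edge iota e d ->
  comp_minus iota vtx e x (vtx d) -> comp_minus iota vtx e x (vtx (iota d)).
Proof.
move=> Hd; rewrite /comp_minus /= => Hx.
apply: connect_trans Hx _; apply: connect1.
by apply/existsP; exists d; rewrite Hd !eqxx.
Qed.

Lemma signed_sum (w : D -> R) (b : 'I_n -> R) (c : 'I_n -> bool) x :
  (forall d, w (iota d) = w d) ->
  (forall v, \sum_(d | vtx d == v) w d = b v) ->
  proper_minus iota vtx e (comp_minus iota vtx e x) c ->
  \sum_(y | comp_minus iota vtx e x y && c y) b y
    - \sum_(y | comp_minus iota vtx e x y && ~~ c y) b y =
  \sum_(d | in_edge iota e d && comp_minus iota vtx e x (vtx d))
     (if c (vtx d) then w d else - w d).
Proof.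
move=> wsym hb hc.
set C := comp_minus iota vtx e x.
set s := fun d => if c (vtx d) then w d else - w d.
have -> : \sum_(y | C y && c y) b y - \sum_(y | C y && ~~ c y) b y
          = \sum_(y | C y) (if c y then b y else - b y).
  rewrite [RHS](bigID c) /=; congr (_ + _).
    by apply: eq_bigr => y /andP [_ ->].
  by rewrite -sumrN; apply: eq_bigr => y /andP [_ /negbTE ->].
have -> : \sum_(y | C y) (if c y then b y else - b y)
          = \sum_(y | C y) \sum_(d | vtx d == y) s d.
  apply: eq_bigr => y _; rewrite -hb; case Hcy: (c y).
    by apply: eq_bigr => d /eqP Hd; rewrite /s Hd Hcy.
  by rewrite -sumrN; apply: eq_bigr => d /eqP Hd; rewrite /s Hd Hcy.
have -> : \sum_(y | C y) \sum_(d | vtx d == y) s d = \sum_(d | C (vtx d)) s d.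
  rewrite [RHS](partition_big vtx C) //; apply: eq_bigr => j Cj.
  by apply: eq_bigl => d; case: eqP => [->|]; rewrite ?Cj ?andbF.
rewrite (bigID (in_edge iota e)) /=.
set S := \sum_(d | C (vtx d) && ~~ in_edge iota e d) s d.
have S0 : S = 0.
  have : S = - S.
    rewrite /S [LHS](reindex_inj (@perm_inj _ iota)) /= -sumrN.
    apply: eq_big => d.
      rewrite in_edge_iota; case Hd: (in_edge iota e d); rewrite ?andbF //=.
      have Hd' : ~~ in_edge iota e d by rewrite Hd.
      have Hd'' : ~~ in_edge iota e (iota d) by rewrite in_edge_iota.
      rewrite ?andbT; apply/idP/idP => HC.
        by have := comp_closed x (iota d) Hd'' HC; rewrite invol.
      exact: comp_closed x d Hd' HC.
    move=> /andP [HC Hd]; move: (hc (iota d) Hd HC); rewrite /s wsym invol.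
    by case: (c (vtx d)); case: (c (vtx (iota d))) => //= _; rewrite ?opprK.
  move=> H; lra.
rewrite S0 addr0; apply: eq_bigl => d; exact: andbC.
Qed.

Lemma edge_sum (F : D -> R) (Q : pred D) : iota e != e ->
  \sum_(d | in_edge iota e d && Q d) F d =
  (if Q e then F e else 0) + (if Q (iota e) then F (iota e) else 0).
Proof.
move=> ne.
rewrite big_mkcond (bigD1 e) // (bigD1 (iota e)) /=; last by rewrite ne.
rewrite big1 ?addr0; last first.
  by move=> i /andP [ie iie]; rewrite /in_edge (negbTE ie) (negbTE iie).
by rewrite /in_edge !eqxx /= orbT.
Qed.

Lemma conn_all :
  (forall x y : 'I_n, connect (adjG iota vtx) x y) ->
  connect (adj_minus iota vtx e) (vtx e) (vtx (iota e)) ->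
  forall u v, connect (adj_minus iota vtx e) u v.
Proof.
move=> conn H.
pose a := [pred y | connect (adj_minus iota vtx e) (vtx e) y].
have step : forall y z, adjG iota vtx y z -> y \in a -> z \in a.
  move=> y z /existsP [d /andP [/eqP Hy /eqP Hz]]; rewrite !inE => Ha.
  case Hd: (in_edge iota e d).
    move: Hd; rewrite /in_edge => /orP [/eqP Hd|/eqP Hd].
      by rewrite -Hz Hd.
    by rewrite -Hz Hd invol connect0.
  apply: connect_trans Ha (connect1 _).
  by apply/existsP; exists d; rewrite Hd Hy Hz !eqxx.
have cl : closed (adjG iota vtx) a.
  move=> y z Hyz; apply/idP/idP; first exact: step.
  apply: step; move: Hyz => /existsP [d /andP [Hy Hz]].
  by apply/existsP; exists (iota d); rewrite invol Hy Hz.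
have all_a : forall u, connect (adj_minus iota vtx e) (vtx e) u.
  move=> u; have := closed_connect cl (conn (vtx e) u).
  by rewrite !inE connect0 => <-.
move=> u v; apply: connect_trans (all_a v).
by rewrite (sym_connect_sym adj_minus_sym).
Qed.

End Aux.

Theorem lemma3p3 (R : realFieldType) (D : finType) (n g : nat)
  (kappa : seq nat) (sigma iota : {perm D}) (vtx : D -> 'I_n)
  (w : D -> R) (b : 'I_n -> R) (e : D) :
  ribbon_graph_in sigma iota vtx kappa g ->
  ~ bipartite iota vtx ->
  (forall d, w (iota d) = w d) ->
  (forall v : 'I_n, \sum_(d | vtx d == v) w d = b v) ->
  static_edge iota vtx e ->
  (is_bridge iota vtx e ->
     forall x : 'I_n, (x = vtx e \/ x = vtx (iota e)) ->
     forall c : 'I_n -> bool,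
       proper_minus iota vtx e (comp_minus iota vtx e x) c -> c x = true ->
       w e = \sum_(y | comp_minus iota vtx e x y && c y) b y
             - \sum_(y | comp_minus iota vtx e x y && ~~ c y) b y)
  /\
  (~ is_bridge iota vtx e ->
     (exists c : 'I_n -> bool, proper_minus iota vtx e predT c)
     /\ (forall c : 'I_n -> bool, proper_minus iota vtx e predT c ->
           c (vtx e) = c (vtx (iota e)))
     /\ (forall c : 'I_n -> bool, proper_minus iota vtx e predT c ->
           c (vtx e) = true -> c (vtx (iota e)) = true ->
           [set y | comp_minus iota vtx e (vtx e) y && c y]
             :|: [set y | comp_minus iota vtx e (vtx e) y && ~~ c y] = [set: 'I_n]
           /\ w e = (\sum_(y | comp_minus iota vtx e (vtx e) y && c y) b y
                    - \sum_(y | comp_minus iota vtx e (vtx e) y && ~~ c y) b y) / 2)).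
Proof.
move=> [invol [fpf [_ [_ [conn _]]]]] nbip wsym hb [_ [x0 [c0 hc0]]].
have ne : iota e != e := fpf e.
have CA := @conn_all D n iota vtx e invol conn.
have csym := sym_connect_sym (@adj_minus_sym D n iota vtx e invol).
split.
  move=> [u [v Huv]] x Hx c hc cx.
  rewrite (signed_sum _ _ _ _ _ _ invol _ _ _ _ wsym hb hc) edge_sum //.
  have nc : ~~ connect (adj_minus iota vtx e) (vtx e) (vtx (iota e)).
    by apply/negP => H; move: Huv; rewrite CA.
  case: Hx => Hx; subst x; rewrite /comp_minus /= connect0.
    by rewrite (negbTE nc) addr0 cx.
  by rewrite csym (negbTE nc) add0r wsym cx.
move=> nbr.
have all : forall u v, connect (adj_minus iota vtx e) u v.
  move=> u v; case H: (connect _ u v) => //; exfalso; apply: nbr.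
  by exists u, v; rewrite H.
have toT : forall c x, proper_minus iota vtx e predT c ->
    proper_minus iota vtx e (comp_minus iota vtx e x) c.
  by move=> c x hc d Hd _; apply: hc.
split.
  by exists c0 => d Hd _; apply: hc0 => //; rewrite /comp_minus /= all.
split.
  move=> c hc; case: (boolP (c (vtx e) == c (vtx (iota e)))) => [/eqP //|H].
  exfalso; apply: nbip; exists c => d.
  case Hd: (in_edge iota e d); last by apply: hc; rewrite ?Hd.
  move: Hd; rewrite /in_edge => /orP [/eqP ->|/eqP ->]; first by [].
  by rewrite invol eq_sym.
move=> c hc c1 c2; split.
  apply/setP => y; rewrite !inE /comp_minus /= all /=; by case: (c y).
rewrite (signed_sum _ _ _ _ _ _ invol _ _ _ _ wsym hb (toT c _ hc)) edge_sum //.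
rewrite /comp_minus /= !all c1 c2 wsym.
lra.
Qed.
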